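(* For every $n \geq 3$, the set $\{D_n\}$ is equidistributed.
   Context: A linear arrangement of $\{1,\ldots,n\}$ is a sequence $a_1\cdots a_n$ in which each of $1,\ldots,n$ appears exactly once. It contains the pattern $ij$ if $a_t=i$ and $a_{t+1}=j$ for some $t$; otherwise it avoids it. $\{D_n\}$ is the set of linear arrangements of $\{1,\ldots,n\}$ avoiding all of the patterns $12, 23, \ldots, (n-1)n, n1$. For a set $X$ of linear arrangements of $\{1,\ldots,n\}$ and $i\in\{1,\ldots,n\}$, the class $X^{(i)}$ is the set of arrangements in $X$ whose first entry is $i$. $X$ is called equidistributed if it is partitioned into its nonempty classes and all nonempty classes $X^{(i)}$ have the same cardinality. *)

(* Defs.v *)
From mathcomp Require Import all_boot all_fingroup.
Set Implicit Arguments. Unset Strict Implicit. Unset Printing Implicit Defensive.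

(* A linear arrangement a_1 ... a_n of {1,...,n} is encoded as a permutation
   s : {perm 'I_n}, with a_{t+1} = (s t) + 1 (positions and values shifted
   down by one, so both range over {0,...,n-1}). *)

Definition contains_pattern n (s : {perm 'I_n}) (i j : nat) : bool :=
  [exists t : 'I_n, exists u : 'I_n,
     [&& val u == (val t).+1, val (s t) == i & val (s u) == j]].

(* D_n : arrangements avoiding 12, 23, ..., (n-1)n, n1;
   in 0-based values: avoid (k, (k+1) mod n) for every k < n *)
Definition Dn n : {set {perm 'I_n}} :=
  [set s | [forall k : 'I_n, ~~ contains_pattern s k (k.+1 %% n)]].

Definition arr_class n (X : {set {perm 'I_n}}) (i : nat) : {set {perm 'I_n}} :=
  [set s in X | [exists t : 'I_n, (val t == 0) && (val (s t) == i)]].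

Definition equidistributed n (X : {set {perm 'I_n}}) : Prop :=
  forall i j : 'I_n, arr_class X i != set0 -> arr_class X j != set0 ->
    #|arr_class X i| = #|arr_class X j|.

(* Main.v *)
Require Import Defs.
From mathcomp Require Import all_boot all_fingroup.
From mathcomp Require Import zify.
Set Implicit Arguments. Unset Strict Implicit. Unset Printing Implicit Defensive.

Section Rot.
Variable n : nat.
Definition rs : {perm 'I_n} := perm (@ordS_inj n).
Definition shf (s : {perm 'I_n}) : {perm 'I_n} := (s * rs)%g.

Lemma shfE s x : shf s x = ordS (s x).
Proof. by rewrite /shf permM /rs permE. Qed.

Lemma shf_contains s (a b : 'I_n) :
  contains_pattern (shf s) (ordS a) (ordS b) -> contains_pattern s a b.
Proof.
case/existsP=> t /existsP [u /and3P [Hu Ht Hs]].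
apply/existsP; exists t; apply/existsP; exists u.
rewrite Hu /=; rewrite !shfE in Ht Hs.
have /ordS_inj -> : ordS (s t) = ordS a by exact/val_inj/eqP.
have /ordS_inj -> : ordS (s u) = ordS b by exact/val_inj/eqP.
by rewrite !eqxx.
Qed.

Lemma shf_Dn s : s \in Dn n -> shf s \in Dn n.
Proof.
rewrite !inE => /forallP H; apply/forallP => k; apply/negP => Hc.
have := H (ord_pred k); apply/negP/negPn.
apply: (@shf_contains s (ord_pred k) (ordS (ord_pred k))).
by rewrite ord_predK.
Qed.

Lemma shf_class (i : 'I_n) :
  #|arr_class (Dn n) i| <= #|arr_class (Dn n) (i.+1 %% n)|.
Proof.
rewrite -(card_imset _ (fun a b (h : shf a = shf b) => mulIg _ _ _ h)).
apply: subset_leq_card; apply/subsetP => y /imsetP [s Hs ->].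
move: Hs; rewrite inE => /andP [HD /existsP [t /andP [Ht Hst]]].
rewrite inE (shf_Dn HD) /=; apply/existsP; exists t; rewrite Ht shfE /=.
by rewrite (eqP Hst).
Qed.
End Rot.

Theorem proposition4p3 (n : nat) : 3 <= n -> equidistributed (Dn n).
Proof.
move=> Hn i j _ _.
set f := fun k => #|arr_class (Dn n) k|.
have step : forall k, k < n -> f k <= f (k.+1 %% n).
  by move=> k Hk; exact: (shf_class (Ordinal Hk)).
have up : forall k, k < n -> f 0 <= f k.
  elim=> [|k IH] Hk //.
  apply: leq_trans (IH (ltnW Hk)) _.
  by have := step k (ltnW Hk); rewrite modn_small.
have down' : forall d, d < n -> f (n.-1 - d) <= f n.-1.
  elim=> [|d IH] Hd; first by rewrite subn0.
  apply: leq_trans (IH (ltnW Hd)).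
  have Ha : n.-1 - d.+1 < n by lia.
  have := step _ Ha.
  have -> : (n.-1 - d.+1).+1 %% n = n.-1 - d by rewrite modn_small; lia.
  done.
have down : forall k, k < n -> f k <= f n.-1.
  move=> k Hk; have := down' (n.-1 - k); rewrite subKn; last by lia.
  by apply; lia.
have last : f n.-1 <= f 0.
  have Hl : n.-1 < n by lia.
  have := step _ Hl.
  have -> : n.-1.+1 %% n = 0 by rewrite prednK ?modnn //; lia.
  done.
have eq0 : forall k, k < n -> f k = f 0.
  move=> k Hk; apply/eqP; rewrite eqn_leq up // andbT.
  by apply: leq_trans (down k Hk) last.
by have := eq0 _ (ltn_ord i); have := eq0 _ (ltn_ord j); rewrite /f => -> ->.
Qed.
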